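(* In any generalised differential Seely category (as defined in the context), the symmetric monoidal category $\mathcal L$, equipped with the comonad $!=\mathcal F\mathcal U$, is a differential Seely category.
   Context: Composition is diagrammatic ($f;g$ = $f$ then $g$); monoidal categories are strict. An LNL adjunction is a symmetric monoidal adjunction $\mathcal F\dashv\mathcal U$, $\mathcal F:\mathscr C\to\mathcal L$, between a cartesian category $(\mathscr C,\times,I)$ and a symmetric monoidal category $(\mathcal L,\otimes,1)$ (symmetry $\sigma$), with $\mathcal U$ lax monoidal via $n_{A,B}:\mathcal U(A)\times\mathcal U(B)\to\mathcal U(A\otimes B)$, $\mathcal F$ strong monoidal via isomorphisms $m_{X,Y}:\mathcal F(X)\otimes\mathcal F(Y)\to\mathcal F(X\times Y)$, $m_1:1\to\mathcal F(I)$; unit $\eta$, counit $\mathbf d$, comonad $!=\mathcal F\mathcal U$ with comultiplication $\mathbf p$. $\mathbf c_X:=\mathcal F(\Delta_X);m_{X,X}^{-1}$, $\mathbf w_X:=\mathcal F(t_X);m_1^{-1}$ ($t_X:X\to I$ terminal), $\mathbf c_A:=\mathbf c_{\mathcal U(A)}$, $\mathbf w_A:=\mathbf w_{\mathcal U(A)}$. $LS(\mathscr C)$: objects $(X,A)$, $X\in\mathscr C,A\in\mathcal L$; morphisms $(f,u):(X,A)\to(Y,B)$ with $f:X\to Y$, $u:\mathcal F(X)\otimes A\to B$; composition $(f,u);(g,v)=(f;g,(\mathbf c_X\otimes\mathrm{id}_A);(\mathcal F(f)\otimes u);v)$, identity $(\mathrm{id}_X,\mathbf w_X\otimes\mathrm{id}_A)$;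 $\mathbf{ls}(X,A)=X$, $\mathbf{ls}(f,u)=f$. GDSC: an LNL adjunction with $\mathcal L$ additive (enriched over commutative monoids, $\otimes$ bilinear in each argument and preserving $0$) and having finite products (hence biproducts $\oplus$, injections $\iota_i$), with a functor $\mathcal T:\mathscr C\to LS(\mathscr C)$ such that: (t.1) $\mathbf{ls}\circ\mathcal T=\mathrm{id}$ (so $\mathcal T(X)=(X,\lambda(X))$), and $\varphi_{X,Y}:=\langle\mathcal T(\pi_1),\mathcal T(\pi_2)\rangle:\mathcal T(X\times Y)\to(X\times Y,\lambda(X)\oplus\lambda(Y))$ is an isomorphism, where $LS(\mathscr C)$ has products $(X,A)\times(Y,B)=(X\times Y,A\oplus B)$ with projections $(\pi_i,\mathbf w_{X\times Y}\otimes\pi_i)$; (t.2) $\mathcal T(\mathcal U(A))=(\mathcal U(A),A)$; (t.3) with $i^{X,Y}_2:=(\mathrm{id}_{X\times Y},\mathbf w_{X\times Y}\otimes\iota_2);\varphi_{X,Y}^{-1}:(X\times Y,\lambda(Y))\to\mathcal T(X\times Y)$, $⦃(f,u)⦄:=\langle\pi_1;f,(\eta_X\times\mathrm{id}_{\mathcal U(A)});n_{\mathcal F(X),A};\mathcal U(u)\rangle:X\times\mathcal U(A)\to Y\times\mathcal U(B)$ and $W(f,u):=(⦃(f,u)⦄,(\mathcal F(\pi_1)\otimes\mathrm{id}_A);u):(X\times\mathcal U(A),A)\to(Y\times\mathcal U(B),B)$, one has $W(f,u);i^{Y,\mathcal U(B)}_2=i^{X,\mathcal U(A)}_2;\mathcal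 T(⦃(f,u)⦄)$ for all $(f,u):(X,A)\to(Y,B)$. Differential Seely category: an additive symmetric monoidal category with finite (bi)products and a comonad $(!,\mathbf d,\mathbf p)$ with Seely isomorphisms $!(A\oplus B)\cong!A\otimes!B$, $!0\cong1$ (giving comonoids $\mathbf c_A,\mathbf w_A$), plus a natural $\partial_A:!A\otimes A\to!A$ satisfying: $\partial_A;\mathbf w_A=0$; $\partial_A;\mathbf c_A=(\mathbf c_A\otimes\mathrm{id}_A);[(\mathrm{id}_{!A}\otimes\partial_A)+(\mathrm{id}_{!A}\otimes\sigma_{!A,A};\partial_A\otimes\mathrm{id}_{!A})]$; $\partial_A;\mathbf d_A=\mathbf w_A\otimes\mathrm{id}_A$; $\partial_A;\mathbf p_A=(\mathbf c_A\otimes\mathrm{id}_A);(\mathbf p_A\otimes\partial_A);\partial_{!A}$; $(\mathrm{id}_{!A}\otimes\sigma_{A,A});(\partial_A\otimes\mathrm{id}_A);\partial_A=(\partial_A\otimes\mathrm{id}_A);\partial_A$. *)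

(* Defs.v *)
Set Implicit Arguments.
Unset Strict Implicit.

Record Cat := {
  ob :> Type;
  hom : ob -> ob -> Type;
  comp : forall A B D : ob, hom A B -> hom B D -> hom A D;
  idm : forall A : ob, hom A A;
  comp_idl : forall (A B : ob) (f : hom A B), comp (idm A) f = f;
  comp_idr : forall (A B : ob) (f : hom A B), comp f (idm B) = f;
  comp_assoc : forall (A B D E : ob) (f : hom A B) (g : hom B D) (h : hom D E),
      comp (comp f g) h = comp f (comp g h) }.
Arguments hom {c} A B : rename.
Arguments comp {c A B D} f g : rename.
Arguments idm {c} A : rename.
Notation "f >> g" := (comp f g) (at level 40, left associativity).

Record Cartesian (K : Cat) := {
  term : K;
  bang : forall X : K, hom X term;
  bang_uniq : forall (X : K) (f : hom X term), f = bang X;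
  prod : K -> K -> K;
  pr1 : forall X Y : K, hom (prod X Y) X;
  pr2 : forall X Y : K, hom (prod X Y) Y;
  pair : forall Z X Y : K, hom Z X -> hom Z Y -> hom Z (prod X Y);
  pair_pr1 : forall (Z X Y : K) (f : hom Z X) (g : hom Z Y), pair f g >> pr1 X Y = f;
  pair_pr2 : forall (Z X Y : K) (f : hom Z X) (g : hom Z Y), pair f g >> pr2 X Y = g;
  pair_uniq : forall (Z X Y : K) (h : hom Z (prod X Y)),
      h = pair (h >> pr1 X Y) (h >> pr2 X Y) }.
Arguments term {K} c : rename.
Arguments bang {K} c X : rename.
Arguments prod {K} c X Y : rename.
Arguments pr1 {K} c X Y : rename.
Arguments pr2 {K} c X Y : rename.
Arguments pair {K} c {Z X Y} f g : rename.

Definition prodm (K : Cat) (P : Cartesian K) (X Y X' Y' : K) (f : hom X X') (g : hom Y Y')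
  : hom (prod P X Y) (prod P X' Y') := pair P (pr1 P X Y >> f) (pr2 P X Y >> g).
Arguments prodm {K} P {X Y X' Y'} f g : rename.
Definition assocC (K : Cat) (P : Cartesian K) (X Y Z : K)
  : hom (prod P (prod P X Y) Z) (prod P X (prod P Y Z)) :=
  pair P (pr1 P _ Z >> pr1 P X Y) (pair P (pr1 P _ Z >> pr2 P X Y) (pr2 P _ Z)).
Arguments assocC {K} P X Y Z : rename.
Definition swapC (K : Cat) (P : Cartesian K) (X Y : K) : hom (prod P X Y) (prod P Y X) :=
  pair P (pr2 P X Y) (pr1 P X Y).
Arguments swapC {K} P X Y : rename.
Definition diagC (K : Cat) (P : Cartesian K) (X : K) : hom X (prod P X X) :=
  pair P (idm X) (idm X).
Arguments diagC {K} P X : rename.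

Record SMC (K : Cat) := {
  tens : K -> K -> K;
  tensm : forall A B A' B' : K, hom A A' -> hom B B' -> hom (tens A B) (tens A' B');
  unit : K;
  asc : forall A B D : K, hom (tens (tens A B) D) (tens A (tens B D));
  asci : forall A B D : K, hom (tens A (tens B D)) (tens (tens A B) D);
  lu : forall A : K, hom (tens unit A) A;
  lui : forall A : K, hom A (tens unit A);
  ru : forall A : K, hom (tens A unit) A;
  rui : forall A : K, hom A (tens A unit);
  sym : forall A B : K, hom (tens A B) (tens B A);
  tensm_id : forall A B : K, tensm (idm A) (idm B) = idm (tens A B);
  tensm_comp : forall (A B D A' B' D' : K) (f : hom A B) (g : hom B D) (f' : hom A' B') (g' : hom B' D'),
      tensm (f >> g) (f' >> g') = tensm f f' >> tensm g g';
  asc_iso1 : forall A B D : K, asc A B D >> asci A B D = idm _;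
  asc_iso2 : forall A B D : K, asci A B D >> asc A B D = idm _;
  asc_nat : forall (A B D A' B' D' : K) (f : hom A A') (g : hom B B') (h : hom D D'),
      tensm (tensm f g) h >> asc A' B' D'
      = asc A B D >> tensm f (tensm g h);
  lu_iso1 : forall A : K, lu A >> lui A = idm _;
  lu_iso2 : forall A : K, lui A >> lu A = idm _;
  lu_nat : forall (A B : K) (f : hom A B), tensm (idm unit) f >> lu B = lu A >> f;
  ru_iso1 : forall A : K, ru A >> rui A = idm _;
  ru_iso2 : forall A : K, rui A >> ru A = idm _;
  ru_nat : forall (A B : K) (f : hom A B), tensm f (idm unit) >> ru B = ru A >> f;
  sym_nat : forall (A B A' B' : K) (f : hom A A') (g : hom B B'),
      tensm f g >> sym A' B' = sym A B >> tensm g f;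
  sym_inv : forall A B : K, sym A B >> sym B A = idm _;
  pentagon : forall A B D E : K,
      asc (tens A B) D E >> asc A B (tens D E)
      = tensm (asc A B D) (idm E) >> asc A (tens B D) E >> tensm (idm A) (asc B D E);
  triangle : forall A B : K,
      asc A unit B >> tensm (idm A) (lu B) = tensm (ru A) (idm B);
  hexagon : forall A B D : K,
      asc A B D >> sym A (tens B D) >> asc B D A
      = tensm (sym A B) (idm D) >> asc B A D >> tensm (idm B) (sym A D) }.
Arguments tens {K} c A B : rename.
Arguments tensm {K} c {A B A' B'} f g : rename.
Arguments unit {K} c : rename.
Arguments asc {K} c A B D : rename.
Arguments asci {K} c A B D : rename.
Arguments lu {K} c A : rename.
Arguments ru {K} c A : rename.
Arguments sym {K} c A B : rename.

Record Additive (K : Cat) (M : SMC K) := {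
  zero : forall A B : K, hom A B;
  add : forall A B : K, hom A B -> hom A B -> hom A B;
  add_assoc : forall (A B : K) (f g h : hom A B), add (add f g) h = add f (add g h);
  add_comm : forall (A B : K) (f g : hom A B), add f g = add g f;
  add_0l : forall (A B : K) (f : hom A B), add (zero A B) f = f;
  comp_0l : forall (A B D : K) (g : hom B D), zero A B >> g = zero A D;
  comp_0r : forall (A B D : K) (f : hom A B), f >> zero B D = zero A D;
  comp_addl : forall (A B D : K) (f f' : hom A B) (g : hom B D),
      add f f' >> g = add (f >> g) (f' >> g);
  comp_addr : forall (A B D : K) (f : hom A B) (g g' : hom B D),
      f >> add g g' = add (f >> g) (f >> g');
  tens_0l : forall (A A' B B' : K) (g : hom B B'),
      tensm M (zero A A') g = zero (tens M A B) (tens M A' B');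
  tens_0r : forall (A A' B B' : K) (f : hom A A'),
      tensm M f (zero B B') = zero (tens M A B) (tens M A' B');
  tens_addl : forall (A A' B B' : K) (f f' : hom A A') (g : hom B B'),
      tensm M (add f f') g = add (tensm M f g) (tensm M f' g);
  tens_addr : forall (A A' B B' : K) (f : hom A A') (g g' : hom B B'),
      tensm M f (add g g') = add (tensm M f g) (tensm M f g') }.
Arguments zero {K M} c A B : rename.
Arguments add {K M} c {A B} f g : rename.

Record Functor (K K' : Cat) := {
  fo :> K -> K';
  fm : forall X Y : K, hom X Y -> hom (fo X) (fo Y);
  fm_id : forall X : K, fm (idm X) = idm (fo X);
  fm_comp : forall (X Y Z : K) (f : hom X Y) (g : hom Y Z), fm (f >> g) = fm f >> fm g }.
Arguments fm {K K'} f {X Y} f0 : rename.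

Definition isIso (K : Cat) (A B : K) (f : hom A B) : Prop :=
  exists g : hom B A, f >> g = idm A /\ g >> f = idm B.

Record LNLdata := {
  Cc : Cat;  CP : Cartesian Cc;
  Lc : Cat;  LM : SMC Lc;
  LA : Additive LM;
  LP : Cartesian Lc;
  Ff : Functor Cc Lc;  Uf : Functor Lc Cc;
  mm  : forall X Y : Cc, hom (tens LM (Ff X) (Ff Y)) (Ff (prod CP X Y));
  mmi : forall X Y : Cc, hom (Ff (prod CP X Y)) (tens LM (Ff X) (Ff Y));
  m1  : hom (unit LM) (Ff (term CP));
  m1i : hom (Ff (term CP)) (unit LM);
  nn  : forall A B : Lc, hom (prod CP (Uf A) (Uf B)) (Uf (tens LM A B));
  n1  : hom (term CP) (Uf (unit LM));
  eta : forall X : Cc, hom X (Uf (Ff X));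
  eps : forall A : Lc, hom (Ff (Uf A)) A }.
Arguments mm : clear implicits.
Arguments mmi : clear implicits.
Arguments nn : clear implicits.
Arguments eta : clear implicits.
Arguments eps : clear implicits.
Arguments m1 : clear implicits.
Arguments m1i : clear implicits.
Arguments n1 : clear implicits.

Section LNLsec.
Variable G : LNLdata.

Local Notation "A ⊗ B" := (tens (LM G) A B) (at level 30, right associativity).
Local Notation "f ⊗' g" := (tensm (LM G) f g) (at level 30, right associativity).
Local Notation "X × Y" := (prod (CP G) X Y) (at level 30, right associativity).
Local Notation "A ⊕ B" := (prod (LP G) A B) (at level 30, right associativity).
Local Notation F := (Ff G).
Local Notation U := (Uf G).
Local Notation "'α'" := (asc (LM G) _ _ _).
Local Notation "'αi'" := (asci (LM G) _ _ _).
Local Notation one := (unit (LM G)).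

Record LNLax : Prop := {
  eta_nat : forall (X Y : Cc G) (f : hom X Y), f >> eta G Y = eta G X >> fm U (fm F f);
  eps_nat : forall (A B : Lc G) (f : hom A B), fm F (fm U f) >> eps G B = eps G A >> f;
  tri1 : forall X : Cc G, fm F (eta G X) >> eps G (F X) = idm (F X);
  tri2 : forall A : Lc G, eta G (U A) >> fm U (eps G A) = idm (U A);
  m_iso1 : forall X Y : Cc G, mm G X Y >> mmi G X Y = idm _;
  m_iso2 : forall X Y : Cc G, mmi G X Y >> mm G X Y = idm _;
  m1_iso1 : m1 G >> m1i G = idm _;
  m1_iso2 : m1i G >> m1 G = idm _;
  m_nat : forall (X Y X' Y' : Cc G) (f : hom X X') (g : hom Y Y'),
      fm F f ⊗' fm F g >> mm G X' Y' = mm G X Y >> fm F (prodm (CP G) f g);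
  m_assoc : forall X Y Z : Cc G,
      (mm G X Y ⊗' idm (F Z)) >> mm G (X × Y) Z >> fm F (assocC (CP G) X Y Z)
      = α >> (idm (F X) ⊗' mm G Y Z) >> mm G X (Y × Z);
  m_unitl : forall X : Cc G,
      (m1 G ⊗' idm (F X)) >> mm G _ X >> fm F (pr2 (CP G) _ X) = lu (LM G) (F X);
  m_unitr : forall X : Cc G,
      (idm (F X) ⊗' m1 G) >> mm G X _ >> fm F (pr1 (CP G) X _) = ru (LM G) (F X);
  m_sym : forall X Y : Cc G,
      mm G X Y >> fm F (swapC (CP G) X Y) = sym (LM G) (F X) (F Y) >> mm G Y X;
  n_nat : forall (A B A' B' : Lc G) (f : hom A A') (g : hom B B'),
      prodm (CP G) (fm U f) (fm U g) >> nn G A' B' = nn G A B >> fm U (f ⊗' g);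
  n_assoc : forall A B D : Lc G,
      prodm (CP G) (nn G A B) (idm (U D)) >> nn G (A ⊗ B) D >> fm U (asc (LM G) A B D)
      = assocC (CP G) (U A) (U B) (U D) >> prodm (CP G) (idm (U A)) (nn G B D) >> nn G A (B ⊗ D);
  n_unitl : forall A : Lc G,
      prodm (CP G) (n1 G) (idm (U A)) >> nn G one A >> fm U (lu (LM G) A) = pr2 (CP G) _ (U A);
  n_unitr : forall A : Lc G,
      prodm (CP G) (idm (U A)) (n1 G) >> nn G A one >> fm U (ru (LM G) A) = pr1 (CP G) (U A) _;
  n_sym : forall A B : Lc G,
      nn G A B >> fm U (sym (LM G) A B) = swapC (CP G) (U A) (U B) >> nn G B A;
  eta_mon : forall X Y : Cc G,
      prodm (CP G) (eta G X) (eta G Y) >> nn G (F X) (F Y) >> fm U (mm G X Y) = eta G (X × Y);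
  eta_mon1 : n1 G >> fm U (m1 G) = eta G (term (CP G));
  eps_mon : forall A B : Lc G,
      mm G (U A) (U B) >> fm F (nn G A B) >> eps G (A ⊗ B) = eps G A ⊗' eps G B;
  eps_mon1 : m1 G >> fm F (n1 G) >> eps G one = idm one }.

Definition cX (X : Cc G) : hom (F X) (F X ⊗ F X) := fm F (diagC (CP G) X) >> mmi G X X.
Definition wX (X : Cc G) : hom (F X) one := fm F (bang (CP G) X) >> m1i G.
Definition cA (A : Lc G) := cX (U A).
Definition wA (A : Lc G) := wX (U A).
(* comultiplication of ! = FU *)
Definition pp (A : Lc G) : hom (F (U A)) (F (U (F (U A)))) := fm F (eta G (U A)).
Definition inj2 (A B : Lc G) : hom B (A ⊕ B) := pair (LP G) (zero (LA G) B A) (idm B).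

Definition LSob := (Cc G * Lc G)%type.
Definition LShom (P Q : LSob) : Type :=
  (hom (fst P) (fst Q) * hom (F (fst P) ⊗ snd P) (snd Q))%type.
Definition LScomp (P Q R : LSob) (x : LShom P Q) (y : LShom Q R) : LShom P R :=
  (fst x >> fst y,
   (cX (fst P) ⊗' idm (snd P)) >> α >> (fm F (fst x) ⊗' snd x) >> snd y).
Definition LSid (P : LSob) : LShom P P :=
  (idm (fst P), (wX (fst P) ⊗' idm (snd P)) >> lu (LM G) (snd P)).
(* pairing into the product (X,A) x (Y,B) = (X x Y, A ⊕ B) of LS(C) *)
Definition LSpair (P Q R : LSob) (x : LShom P Q) (y : LShom P R)
  : LShom P (fst Q × fst R, snd Q ⊕ snd R) :=
  (pair (CP G) (fst x) (fst y), pair (LP G) (snd x) (snd y)).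
Definition castsrc (X : Cc G) (A A' : Lc G) (Q : LSob) (e : A = A') (x : LShom (X, A') Q)
  : LShom (X, A) Q :=
  match e in (_ = A0) return (LShom (X, A0) Q -> LShom (X, A) Q) with
  | eq_refl => fun z => z end x.

Definition brace (X Y : Cc G) (A B : Lc G) (x : LShom (X, A) (Y, B)) : hom (X × U A) (Y × U B) :=
  pair (CP G) (pr1 (CP G) X (U A) >> fst x)
    (prodm (CP G) (eta G X) (idm (U A)) >> nn G (F X) A >> fm U (snd x)).
Definition Wm (X Y : Cc G) (A B : Lc G) (x : LShom (X, A) (Y, B))
  : LShom (X × U A, A) (Y × U B, B) :=
  (brace x, (fm F (pr1 (CP G) X (U A)) ⊗' idm A) >> snd x).

(* Data of the functor T : C -> LS(C) with ls o T = id:  T(X) = (X, lam X), T(f) = (f, Tm f);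
   together with a chosen inverse of phi. *)
Record GDSCdata := {
  lam : Cc G -> Lc G;
  Tm : forall X Y : Cc G, hom X Y -> hom (F X ⊗ lam X) (lam Y);
  phii : forall X Y : Cc G, LShom (X × Y, lam X ⊕ lam Y) (X × Y, lam (X × Y)) }.

Section Tsec.
Variable T : GDSCdata.
Definition Tob (X : Cc G) : LSob := (X, lam T X).
Definition TLS (X Y : Cc G) (f : hom X Y) : LShom (Tob X) (Tob Y) := (f, Tm T f).
Definition phi (X Y : Cc G) : LShom (Tob (X × Y)) (X × Y, lam T X ⊕ lam T Y) :=
  LSpair (TLS (pr1 (CP G) X Y)) (TLS (pr2 (CP G) X Y)).
Definition i2 (X Y : Cc G) : LShom (X × Y, lam T Y) (X × Y, lam T (X × Y)) :=
  LScomp (P := (X × Y, lam T Y)) (Q := (X × Y, lam T X ⊕ lam T Y))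
    (idm (X × Y), (wX (X × Y) ⊗' inj2 (lam T X) (lam T Y)) >> lu (LM G) _)
    (phii T X Y).

Record GDSCax : Prop := {
  T_id : forall X : Cc G, TLS (idm X) = LSid (Tob X);
  T_comp : forall (X Y Z : Cc G) (f : hom X Y) (g : hom Y Z), TLS (f >> g) = LScomp (TLS f) (TLS g);
  phi_inv1 : forall X Y : Cc G, LScomp (phi X Y) (phii T X Y) = LSid _;
  phi_inv2 : forall X Y : Cc G, LScomp (phii T X Y) (phi X Y) = LSid _;
  lam_U : forall A : Lc G, lam T (U A) = A;
  t3 : forall (X Y : Cc G) (A B : Lc G) (x : LShom (X, A) (Y, B)),
      LScomp (Wm x) (castsrc (eq_sym (lam_U B)) (i2 Y (U B)))
      = LScomp (castsrc (eq_sym (lam_U A)) (i2 X (U A))) (TLS (brace x)) }.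
End Tsec.

Definition DiffSeely : Prop :=
  (forall A : Lc G, pp A >> eps G (F (U A)) = idm _) /\
  (forall A : Lc G, pp A >> fm F (fm U (eps G A)) = idm _) /\
  (forall A : Lc G, pp A >> pp (F (U A)) = pp A >> fm F (fm U (pp A))) /\
  (* Seely isomorphisms !(A ⊕ B) ≅ !A ⊗ !B and !0 ≅ 1 (inducing the comonoids cA, wA) *)
  (forall A B : Lc G,
      isIso (fm F (pair (CP G) (fm U (pr1 (LP G) A B)) (fm U (pr2 (LP G) A B))) >> mmi G (U A) (U B))) /\
  isIso (fm F (bang (CP G) (U (term (LP G)))) >> m1i G) /\
  exists dd : forall A : Lc G, hom (F (U A) ⊗ A) (F (U A)),
    (forall (A B : Lc G) (f : hom A B), (fm F (fm U f) ⊗' f) >> dd B = dd A >> fm F (fm U f)) /\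
    (forall A : Lc G, dd A >> wA A = zero (LA G) _ _) /\
    (forall A : Lc G, dd A >> cA A
        = (cA A ⊗' idm A) >> α >>
          add (LA G) (idm (F (U A)) ⊗' dd A)
                     ((idm (F (U A)) ⊗' sym (LM G) (F (U A)) A) >> αi >> (dd A ⊗' idm (F (U A))))) /\
    (forall A : Lc G, dd A >> eps G A = (wA A ⊗' idm A) >> lu (LM G) A) /\
    (forall A : Lc G, dd A >> pp A = (cA A ⊗' idm A) >> α >> (pp A ⊗' dd A) >> dd (F (U A))) /\
    (forall A : Lc G, α >> (idm (F (U A)) ⊗' sym (LM G) A A) >> αi >> (dd A ⊗' idm A) >> dd A
        = (dd A ⊗' idm A) >> dd A).

End LNLsec.

(* Main.v *)
Require Import Defs.
Set Implicit Arguments.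
Unset Strict Implicit.

Lemma rk2 {K:Cat} {A B D E: K} {f : hom A B} {g : hom B D} {h : hom A D} :
  f >> g = h -> forall (k : hom D E), f >> (g >> k) = h >> k.
Proof. intros H k. rewrite <- comp_assoc, H. reflexivity. Qed.
Lemma rk3 {K:Cat} {A B D E F: K} {f : hom A B} {g : hom B D} {h : hom D E} {r : hom A E} :
  f >> (g >> h) = r -> forall (k : hom E F), f >> (g >> (h >> k)) = r >> k.
Proof. intros H k. rewrite <- (comp_assoc g h k), <- comp_assoc, H. reflexivity. Qed.
Lemma rk4 {K:Cat} {A B D E F X: K} {f : hom A B} {g : hom B D} {h : hom D E} {i : hom E F} {r : hom A F} :
  f >> (g >> (h >> i)) = r -> forall (k : hom F X), f >> (g >> (h >> (i >> k))) = r >> k.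
Proof. intros H k. rewrite <- (comp_assoc h i k), <- (comp_assoc g _ k), <- comp_assoc, H. reflexivity. Qed.
Lemma rk5 {K:Cat} {A B D E F X Y: K} {f : hom A B} {g : hom B D} {h : hom D E} {i : hom E F} {j : hom F X} {r : hom A X} :
  f >> (g >> (h >> (i >> j))) = r -> forall (k : hom X Y), f >> (g >> (h >> (i >> (j >> k)))) = r >> k.
Proof. intros H k. rewrite <- (comp_assoc i j k), <- (comp_assoc h _ k), <- (comp_assoc g _ k), <- comp_assoc, H. reflexivity. Qed.
Ltac nrm := rewrite ?comp_assoc.
Ltac rwh H := nrm; rewrite ?comp_assoc in H;
  first [rewrite (rk5 H) | rewrite (rk4 H) | rewrite (rk3 H) | rewrite (rk2 H) | rewrite H]; nrm.
Tactic Notation "rwa" open_constr(E) := let H := fresh "H" in epose proof E as H; rwh H; clear H.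
Tactic Notation "rwb" open_constr(E) := let H := fresh "H" in epose proof (eq_sym E) as H; rwh H; clear H.

Section Gen.
Context {K : Cat}.
Context {M : SMC K}.
Local Notation "A ⊗ B" := (tens M A B) (at level 30, right associativity).
Local Notation "f ⊗' g" := (tensm M f g) (at level 30, right associativity).
Local Notation one := (unit M).

Lemma tid (A B : K) : idm A ⊗' idm B = idm (A ⊗ B). Proof. apply tensm_id. Qed.

Lemma tsplit {A B A' B' : K} (f : hom A A') (g : hom B B') :
  f ⊗' g = (f ⊗' idm B) >> (idm A' ⊗' g).
Proof. rewrite <- tensm_comp, comp_idl, comp_idr. reflexivity. Qed.
Lemma tsplit' (A B A' B' : K) (f : hom A A') (g : hom B B') :
  f ⊗' g = (idm A ⊗' g) >> (f ⊗' idm B').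
Proof. rewrite <- tensm_comp, comp_idl, comp_idr. reflexivity. Qed.
Lemma tl {A B D E : K} (f : hom A B) (g : hom B D) :
  (f ⊗' idm E) >> (g ⊗' idm E) = (f >> g) ⊗' idm E.
Proof. rewrite <- tensm_comp, comp_idl. reflexivity. Qed.
Lemma tr {A B D E : K} (f : hom A B) (g : hom B D) :
  (idm E ⊗' f) >> (idm E ⊗' g) = idm E ⊗' (f >> g).
Proof. rewrite <- tensm_comp, comp_idl. reflexivity. Qed.
Lemma tlr {A B A' B' : K} (f : hom A A') (g : hom B B') :
  (f ⊗' idm B) >> (idm A' ⊗' g) = f ⊗' g.
Proof. symmetry; apply tsplit. Qed.
Lemma trl {A B A' B' : K} (f : hom A A') (g : hom B B') :
  (idm A ⊗' g) >> (f ⊗' idm B') = f ⊗' g.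
Proof. symmetry; apply tsplit'. Qed.
Lemma tcomm {A B A' B' : K} (f : hom A A') (g : hom B B') :
  (idm A ⊗' g) >> (f ⊗' idm B') = (f ⊗' idm B) >> (idm A' ⊗' g).
Proof. rewrite trl, tlr. reflexivity. Qed.
Lemma tgl {A B A' B' D : K} (f : hom A A') (g : hom B B') (h : hom A' D) :
  (f ⊗' g) >> (h ⊗' idm B') = (f >> h) ⊗' g.
Proof. rewrite <- tensm_comp, comp_idr. reflexivity. Qed.
Lemma tgr {A B A' B' D : K} (f : hom A A') (g : hom B B') (h : hom B' D) :
  (f ⊗' g) >> (idm A' ⊗' h) = f ⊗' (g >> h).
Proof. rewrite <- tensm_comp, comp_idr. reflexivity. Qed.
Lemma tlg {A B A' B' D : K} (f : hom A A') (g : hom B B') (h : hom D A) :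
  (h ⊗' idm B) >> (f ⊗' g) = (h >> f) ⊗' g.
Proof. rewrite <- tensm_comp, comp_idl. reflexivity. Qed.
Lemma trg {A B A' B' D : K} (f : hom A A') (g : hom B B') (h : hom D B) :
  (idm A ⊗' h) >> (f ⊗' g) = f ⊗' (h >> g).
Proof. rewrite <- tensm_comp, comp_idl. reflexivity. Qed.

Lemma an1 {A A' B D : K} (f : hom A A') :
  ((f ⊗' idm B) ⊗' idm D) >> asc M A' B D = asc M A B D >> (f ⊗' idm (B ⊗ D)).
Proof. rewrite asc_nat, tid. reflexivity. Qed.
Lemma an2 {A B B' D : K} (g : hom B B') :
  ((idm A ⊗' g) ⊗' idm D) >> asc M A B' D = asc M A B D >> (idm A ⊗' (g ⊗' idm D)).
Proof. rewrite asc_nat. reflexivity. Qed.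
Lemma an3 {A B D D' : K} (h : hom D D') :
  (idm (A ⊗ B) ⊗' h) >> asc M A B D' = asc M A B D >> (idm A ⊗' (idm B ⊗' h)).
Proof. rewrite <- tid, asc_nat. reflexivity. Qed.

Lemma an {A B D A' B' D' : K} (f : hom A A') (g : hom B B') (h : hom D D') :
  ((f ⊗' g) ⊗' h) >> asc M A' B' D' = asc M A B D >> (f ⊗' (g ⊗' h)).
Proof. apply asc_nat. Qed.
Lemma aai (A B D : K) : asc M A B D >> asci M A B D = idm _. Proof. apply asc_iso1. Qed.
Lemma aia (A B D : K) : asci M A B D >> asc M A B D = idm _. Proof. apply asc_iso2. Qed.

Lemma ain {A B D A' B' D' : K} (f : hom A A') (g : hom B B') (h : hom D D') :
  (f ⊗' (g ⊗' h)) >> asci M A' B' D' = asci M A B D >> ((f ⊗' g) ⊗' h).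
Proof.
  transitivity (asci M A B D >> asc M A B D >> (f ⊗' (g ⊗' h)) >> asci M A' B' D').
  rewrite asc_iso2, comp_idl. reflexivity.
  rwb (asc_nat M _ _ _). rwa (aai _ _ _). rewrite comp_idr. reflexivity.
Qed.
Lemma ain1 {A A' B D : K} (f : hom A A') :
  (f ⊗' idm (B ⊗ D)) >> asci M A' B D = asci M A B D >> ((f ⊗' idm B) ⊗' idm D).
Proof. rewrite <- tid, ain. reflexivity. Qed.
Lemma ain2 {A B B' D : K} (g : hom B B') :
  (idm A ⊗' (g ⊗' idm D)) >> asci M A B' D = asci M A B D >> ((idm A ⊗' g) ⊗' idm D).
Proof. rewrite ain. reflexivity. Qed.
Lemma ain3 {A B D D' : K} (h : hom D D') :
  (idm A ⊗' (idm B ⊗' h)) >> asci M A B D' = asci M A B D >> (idm (A ⊗ B) ⊗' h).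
Proof. rewrite ain, tid. reflexivity. Qed.

Lemma lun {A B : K} (f : hom A B) : (idm one ⊗' f) >> lu M B = lu M A >> f.
Proof. apply lu_nat. Qed.
Lemma symn {A B A' B' : K} (f : hom A A') (g : hom B B') :
  (f ⊗' g) >> sym M A' B' = sym M A B >> (g ⊗' f).
Proof. apply sym_nat. Qed.
Lemma ss (A B : K) : sym M A B >> sym M B A = idm _. Proof. apply sym_inv. Qed.

Lemma one_cancel {A B : K} (f g : hom A B) : idm one ⊗' f = idm one ⊗' g -> f = g.
Proof.
  intro H.
  assert (E : forall h : hom A B, h = lui M A >> (idm one ⊗' h) >> lu M B).
  { intro h. nrm. rewrite lun. rewrite <- comp_assoc, lu_iso2, comp_idl. reflexivity. }
  rewrite (E f), (E g), H. reflexivity.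
Qed.

Lemma kelly (B D : K) : asc M one B D >> lu M (B ⊗ D) = lu M B ⊗' idm D.
Proof.
  apply one_cancel.
  set (P := (asc M one one B ⊗' idm D) >> asc M one (one ⊗ B) D).
  assert (canc : forall (X : K) (p q : hom (one ⊗ ((one ⊗ B) ⊗ D)) X), P >> p = P >> q -> p = q).
  { intros X p q H.
    assert (E : forall r : hom _ X, r = (asci M one (one ⊗ B) D >> (asci M one one B ⊗' idm D)) >> (P >> r)).
    { intro r. unfold P. nrm. rwa (tl _ _). rwa (aia _ _ _). rewrite tid, comp_idl.
      rwa (aia _ _ _). rewrite comp_idl. reflexivity. }
    rewrite (E p), (E q), H. reflexivity. }
  apply canc. unfold P.
  rewrite <- (tr (asc M one B D) (lu M (B ⊗ D))).
  rwb (pentagon M one one B D).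
  rwa (triangle M one (B ⊗ D)).
  rwb (an1 _). 
  rewrite <- (triangle M one B). rwb (tl _ _). rwa (an2 _). reflexivity.
Qed.

Lemma hexa' (A B D : K) : asc M A B D >> sym M A (B ⊗ D) =
  (sym M A B ⊗' idm D) >> asc M B A D >> (idm B ⊗' sym M A D) >> asci M B D A.
Proof.
  rewrite <- hexagon. nrm. rewrite aai, comp_idr. reflexivity.
Qed.
End Gen.


Section Cart.
Context {K : Cat}.
Context {P : Cartesian K}.
Lemma pp1 {Z X Y : K} (f : hom Z X) (g : hom Z Y) : pair P f g >> pr1 P X Y = f.
Proof. apply pair_pr1. Qed.
Lemma pp2 {Z X Y : K} (f : hom Z X) (g : hom Z Y) : pair P f g >> pr2 P X Y = g.
Proof. apply pair_pr2. Qed.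
Lemma pp1k {Z X Y W : K} (f : hom Z X) (g : hom Z Y) (k : hom X W) : pair P f g >> (pr1 P X Y >> k) = f >> k.
Proof. rewrite <- comp_assoc, pair_pr1. reflexivity. Qed.
Lemma pp2k {Z X Y W : K} (f : hom Z X) (g : hom Z Y) (k : hom Y W) : pair P f g >> (pr2 P X Y >> k) = g >> k.
Proof. rewrite <- comp_assoc, pair_pr2. reflexivity. Qed.
Lemma pair_ext {Z X Y : K} (h k : hom Z (prod P X Y)) :
  h >> pr1 P X Y = k >> pr1 P X Y -> h >> pr2 P X Y = k >> pr2 P X Y -> h = k.
Proof. intros H1 H2. rewrite (pair_uniq h), (pair_uniq k), H1, H2. reflexivity. Qed.
Lemma pair_comp {W Z X Y : K} (h : hom W Z) (f : hom Z X) (g : hom Z Y) :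
  h >> pair P f g = pair P (h >> f) (h >> g).
Proof. apply pair_ext; nrm; rewrite ?pp1, ?pp2; reflexivity. Qed.
Lemma pair_compk {W Z X Y V : K} (h : hom W Z) (f : hom Z X) (g : hom Z Y) (k : hom (prod P X Y) V) :
  h >> (pair P f g >> k) = pair P (h >> f) (h >> g) >> k.
Proof. rewrite <- comp_assoc, pair_comp. reflexivity. Qed.
Lemma pair_id {X Y : K} : pair P (pr1 P X Y) (pr2 P X Y) = idm _.
Proof. apply pair_ext; rewrite ?pp1, ?pp2, ?comp_idl; reflexivity. Qed.
Lemma pair_comp2 {Z X Y X' Y' : K} (f : hom Z X) (g : hom Z Y) (a : hom (prod P X Y) X') (b : hom (prod P X Y) Y') :
  pair P f g >> pair P a b = pair P (pair P f g >> a) (pair P f g >> b).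
Proof. apply pair_comp. Qed.
Lemma bang_eq {X : K} (f g : hom X (term P)) : f = g.
Proof. rewrite (bang_uniq f), (bang_uniq g). reflexivity. Qed.
End Cart.

Ltac csimp := repeat progress (nrm; rewrite ?pp1, ?pp2, ?pp1k, ?pp2k, ?pair_comp, ?pair_compk, ?comp_idl, ?comp_idr).
Ltac cunf := unfold prodm, diagC, swapC, assocC in *.

Section Add.
Context {K : Cat}.
Context {M : SMC K}.
Context {a : Additive M}.
Context {P : Cartesian K}.
Lemma pair_add {Z X Y : K} (f f' : hom Z X) (g g' : hom Z Y) :
  add a (pair P f g) (pair P f' g') = pair P (add a f f') (add a g g').
Proof. apply pair_ext; rewrite comp_addl, ?pp1, ?pp2; reflexivity. Qed.
Lemma add_0r {X Y : K} (f : hom X Y) : add a f (zero a X Y) = f.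
Proof. rewrite add_comm, add_0l. reflexivity. Qed.
Lemma pair_zero {Z X Y : K} : pair P (zero a Z X) (zero a Z Y) = zero a _ _.
Proof. apply pair_ext; rewrite ?pp1, ?pp2, comp_0l; reflexivity. Qed.
Lemma pair_split {Z X Y : K} (f : hom Z X) (g : hom Z Y) :
  pair P f g = add a (pair P f (zero a _ _)) (pair P (zero a _ _) g).
Proof. rewrite pair_add, add_0l, add_0r. reflexivity. Qed.
End Add.

Lemma fc {K K' : Cat} {Fn : Functor K K'} {X Y Z : K} (f : hom X Y) (g : hom Y Z) :
  fm Fn f >> fm Fn g = fm Fn (f >> g).
Proof. rewrite fm_comp. reflexivity. Qed.
Ltac fcs := repeat (rwa (fc _ _)).


Section LNL.
Variable G : LNLdata.
Variable HG : LNLax G.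
Local Notation "A ⊗ B" := (tens (LM G) A B) (at level 30, right associativity).
Local Notation "f ⊗' g" := (tensm (LM G) f g) (at level 30, right associativity).
Local Notation "X × Y" := (prod (CP G) X Y) (at level 30, right associativity).
Local Notation "A ⊕ B" := (prod (LP G) A B) (at level 30, right associativity).
Local Notation F := (Ff G).
Local Notation U := (Uf G).
Local Notation "'α'" := (asc (LM G) _ _ _).
Local Notation "'αi'" := (asci (LM G) _ _ _).
Local Notation one := (unit (LM G)).
Local Notation LM := (LM G).

Lemma mm_mmi (X Y : Cc G) : mm G X Y >> mmi G X Y = idm _. Proof. apply (m_iso1 HG). Qed.
Lemma mmi_mm (X Y : Cc G) : mmi G X Y >> mm G X Y = idm _. Proof. apply (m_iso2 HG). Qed.
Lemma m1_m1i : m1 G >> m1i G = idm _. Proof. apply (m1_iso1 HG). Qed.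
Lemma m1i_m1 : m1i G >> m1 G = idm _. Proof. apply (m1_iso2 HG). Qed.

Lemma mmi_nat {X Y X' Y' : Cc G} (f : hom X X') (g : hom Y Y') :
  mmi G X Y >> (fm F f ⊗' fm F g) = fm F (prodm (CP G) f g) >> mmi G X' Y'.
Proof.
  transitivity (mmi G X Y >> (fm F f ⊗' fm F g) >> mm G X' Y' >> mmi G X' Y').
  nrm. rewrite mm_mmi, comp_idr. reflexivity.
  rwa (m_nat HG f g). rwa (mmi_mm _ _). rewrite comp_idl. reflexivity.
Qed.

Lemma fid (X : Cc G) : fm F (idm X) = idm _. Proof. apply fm_id. Qed.
Lemma uid (A : Lc G) : fm U (idm A) = idm _. Proof. apply fm_id. Qed.

Lemma cX_nat {X Y : Cc G} (f : hom X Y) : fm F f >> cX Y = cX X >> (fm F f ⊗' fm F f).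
Proof.
  unfold cX. nrm. rewrite mmi_nat. fcs. f_equal. f_equal.
  cunf. csimp. reflexivity.
Qed.
Lemma wX_nat {X Y : Cc G} (f : hom X Y) : fm F f >> wX Y = wX X.
Proof.
  unfold wX. rewrite <- comp_assoc, <- fm_comp. f_equal. f_equal. apply bang_eq.
Qed.

Lemma mmi_natl {X Y X' : Cc G} (f : hom X X') :
  mmi G X Y >> (fm F f ⊗' idm (F Y)) = fm F (prodm (CP G) f (idm Y)) >> mmi G X' Y.
Proof. rewrite <- mmi_nat, fid. reflexivity. Qed.
Lemma mmi_natr {X Y Y' : Cc G} (g : hom Y Y') :
  mmi G X Y >> (idm (F X) ⊗' fm F g) = fm F (prodm (CP G) (idm X) g) >> mmi G X Y'.
Proof. rewrite <- mmi_nat, fid. reflexivity. Qed.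

Lemma c_unitl (X : Cc G) : cX X >> (wX X ⊗' idm (F X)) >> lu LM (F X) = idm _.
Proof.
  unfold cX, wX. rewrite <- (m_unitl HG X). nrm.
  rwa (tl _ _). rewrite m1i_m1, comp_idr. rwa (mmi_natl _). rwa (mmi_mm _ _). rewrite comp_idl.
  fcs. rewrite <- fm_id. f_equal. cunf. csimp. reflexivity.
Qed.

Lemma c_unitr (X : Cc G) : cX X >> (idm (F X) ⊗' wX X) >> ru LM (F X) = idm _.
Proof.
  unfold cX, wX. rewrite <- (m_unitr HG X). nrm.
  rwa (tr _ _). rewrite m1i_m1, comp_idr. rwa (mmi_natr _). rwa (mmi_mm _ _). rewrite comp_idl.
  fcs. rewrite <- fm_id. f_equal. cunf. csimp. reflexivity.
Qed.

Lemma asc_expr (X Y Z : Cc G) : asc LM (F X) (F Y) (F Z) =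
  (mm G X Y ⊗' idm (F Z)) >> mm G (X × Y) Z >> fm F (assocC (CP G) X Y Z) >> mmi G X (Y × Z)
  >> (idm (F X) ⊗' mmi G Y Z).
Proof.
  rewrite (m_assoc HG). nrm. rwa (mm_mmi _ _). rewrite comp_idl, tr, mm_mmi, tid, comp_idr. reflexivity.
Qed.

Lemma c_assoc (X : Cc G) : cX X >> (cX X ⊗' idm (F X)) >> asc LM _ _ _ = cX X >> (idm (F X) ⊗' cX X).
Proof.
  rewrite asc_expr. unfold cX. nrm. rwa (tl _ _). rewrite mmi_mm, comp_idr.
  rwa (mmi_natl _). rwa (mmi_mm _ _). rewrite comp_idl.
  rewrite <- (tr (fm F (diagC (CP G) X)) (mmi G X X)).
  rwa (mmi_natr _). fcs. f_equal. f_equal. cunf. csimp. reflexivity.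
Qed.

Lemma mmi_sym (X Y : Cc G) : mmi G X Y >> sym LM (F X) (F Y) = fm F (swapC (CP G) X Y) >> mmi G Y X.
Proof.
  transitivity (mmi G X Y >> sym LM (F X) (F Y) >> mm G Y X >> mmi G Y X).
  nrm. rewrite mm_mmi, comp_idr. reflexivity.
  rwb (m_sym HG _ _). rwa (mmi_mm _ _). rewrite comp_idl. reflexivity.
Qed.

Lemma c_comm (X : Cc G) : cX X >> sym LM (F X) (F X) = cX X.
Proof.
  unfold cX. nrm. rewrite mmi_sym. rewrite <- comp_assoc, <- fm_comp. f_equal. f_equal.
  cunf. csimp. reflexivity.
Qed.

Lemma adj_expr {Z : Cc G} {A : Lc G} (g : hom Z (U A)) : g = eta G Z >> fm U (fm F g >> eps G A).
Proof.
  rewrite fm_comp, <- comp_assoc, <- (eta_nat HG g). nrm. rewrite (tri2 HG), comp_idr. reflexivity.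
Qed.
Lemma adj_uniq {Z : Cc G} {A : Lc G} (g h : hom Z (U A)) :
  fm F g >> eps G A = fm F h >> eps G A -> g = h.
Proof. intro H. rewrite (adj_expr g), (adj_expr h), H. reflexivity. Qed.
Lemma epsn {A B : Lc G} (f : hom A B) : fm F (fm U f) >> eps G B = eps G A >> f.
Proof. apply (eps_nat HG). Qed.
Lemma tri1' (X : Cc G) : fm F (eta G X) >> eps G (F X) = idm _. Proof. apply (tri1 HG). Qed.
Lemma tri2' (A : Lc G) : eta G (U A) >> fm U (eps G A) = idm _. Proof. apply (tri2 HG). Qed.

Definition psi (A B : Lc G) : hom (U (A ⊕ B)) (U A × U B) :=
  pair (CP G) (fm U (pr1 (LP G) A B)) (fm U (pr2 (LP G) A B)).
Definition psii (A B : Lc G) : hom (U A × U B) (U (A ⊕ B)) :=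
  eta G _ >> fm U (pair (LP G) (fm F (pr1 (CP G) _ _) >> eps G A) (fm F (pr2 (CP G) _ _) >> eps G B)).

Lemma fpsii_eps (A B : Lc G) : fm F (psii A B) >> eps G _ =
  pair (LP G) (fm F (pr1 (CP G) _ _) >> eps G A) (fm F (pr2 (CP G) _ _) >> eps G B).
Proof. unfold psii. rewrite fm_comp. nrm. rewrite epsn. rwa (tri1' _). apply comp_idl. Qed.

Lemma psi_psii (A B : Lc G) : psi A B >> psii A B = idm _.
Proof.
  apply adj_uniq. rewrite fm_comp. nrm. rewrite fpsii_eps. rewrite fid, comp_idl.
  rewrite pair_comp. unfold psi. nrm. fcs. rewrite pp1, pp2. rewrite !epsn. rewrite <- pair_comp, pair_id.
  apply comp_idr.
Qed.

Lemma psii_psi (A B : Lc G) : psii A B >> psi A B = idm _.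
Proof.
  apply pair_ext; unfold psi; nrm; rewrite ?pp1, ?pp2, comp_idl; apply adj_uniq;
  rewrite fm_comp; nrm; rewrite epsn; rwa (fpsii_eps _ _); rewrite ?pp1, ?pp2; reflexivity.
Qed.

Lemma u0_uniq {Z : Cc G} (g h : hom Z (U (term (LP G)))) : g = h.
Proof. apply adj_uniq. apply bang_eq. Qed.

Definition kk (A : Lc G) : hom (U A × U A) (U A) :=
  psii A A >> fm U (add (LA G) (pr1 (LP G) A A) (pr2 (LP G) A A)).

Lemma fk_eps (A : Lc G) : fm F (kk A) >> eps G A =
  add (LA G) (fm F (pr1 (CP G) _ _) >> eps G A) (fm F (pr2 (CP G) _ _) >> eps G A).
Proof.
  unfold kk. rewrite fm_comp. nrm. rewrite epsn. rwa (fpsii_eps _ _).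
  rewrite comp_addr, pp1, pp2. reflexivity.
Qed.

Lemma k_assoc (A : Lc G) : prodm (CP G) (kk A) (idm _) >> kk A =
  assocC (CP G) _ _ _ >> prodm (CP G) (idm _) (kk A) >> kk A.
Proof.
  apply adj_uniq. rewrite !fm_comp. nrm. rewrite !fk_eps. rewrite !comp_addr.
  fcs. cunf. csimp. rewrite <- !fc. nrm. rewrite !fk_eps, !comp_addr. fcs. csimp.
  rewrite add_assoc. reflexivity.
Qed.

Lemma k_comm (A : Lc G) : swapC (CP G) _ _ >> kk A = kk A.
Proof.
  apply adj_uniq. rewrite !fm_comp. nrm. rewrite !fk_eps. rewrite !comp_addr.
  fcs. cunf. csimp. apply add_comm.
Qed.
End LNL.


Section KAP.
Variable G : LNLdata.
Variable HG : LNLax G.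
Local Notation "A ⊗ B" := (tens (LM G) A B) (at level 30, right associativity).
Local Notation "f ⊗' g" := (tensm (LM G) f g) (at level 30, right associativity).
Local Notation "X × Y" := (prod (CP G) X Y) (at level 30, right associativity).
Local Notation "A ⊕ B" := (prod (LP G) A B) (at level 30, right associativity).
Local Notation F := (Ff G).
Local Notation U := (Uf G).
Local Notation "'α'" := (asc (LM G) _ _ _).
Local Notation "'αi'" := (asci (LM G) _ _ _).
Local Notation one := (unit (LM G)).
Local Notation LM := (LM G).
Local Notation LA := (LA G).

Definition kap {X : Cc G} {A B D : Lc G} (u : hom (F X ⊗ A) B) (v : hom (F X ⊗ B) D) : hom (F X ⊗ A) D :=
  (cX X ⊗' idm A) >> asc LM _ _ _ >> (idm (F X) ⊗' u) >> v.
Definition rix {X Y : Cc G} (f : hom X Y) {B D : Lc G} (v : hom (F Y ⊗ B) D) : hom (F X ⊗ B) D :=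
  (fm F f ⊗' idm B) >> v.
Definition iot (X : Cc G) (A : Lc G) : hom (F X ⊗ A) A := (wX X ⊗' idm A) >> lu LM A.

Lemma coh1 (X : Cc G) (A : Lc G) :
  (cX X ⊗' idm A) >> asc LM _ _ _ >> (cX X ⊗' idm (F X ⊗ A)) >> asc LM _ _ _ =
  (cX X ⊗' idm A) >> asc LM _ _ _ >> (idm (F X) ⊗' (cX X ⊗' idm A)) >> (idm (F X) ⊗' asc LM _ _ _).
Proof.
  rwb (an1 _). rwa (pentagon LM _ _ _ _). rwa (tl _ _). rwa (tl _ _).
 rwa (c_assoc HG _). rewrite <- (tl (cX X) (idm (F X) ⊗' cX X)).
  nrm. rwa (an2 _). reflexivity.
Qed.

Lemma K_assoc {X : Cc G} {A B D E : Lc G} (u : hom (F X ⊗ A) B) (v : hom (F X ⊗ B) D) (t : hom (F X ⊗ D) E) :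
  kap (kap u v) t = kap u (kap v t).
Proof.
  unfold kap. nrm. rwa (tcomm _ _). rwa (an3 _).
  rewrite <- !tr. nrm. rwb (coh1 _ _). reflexivity.
Qed.

Lemma K_idl {X : Cc G} {A D : Lc G} (v : hom (F X ⊗ A) D) : kap (iot X A) v = v.
Proof.
  unfold kap, iot. rewrite <- tr. nrm. rwb (an2 _). rwa (triangle LM _ _). rwa (tl _ _).
  rwa (tl _ _). rwa (c_unitr HG _). rewrite tid, comp_idl. reflexivity.
Qed.

Lemma K_idr {X : Cc G} {A B : Lc G} (u : hom (F X ⊗ A) B) : kap u (iot X B) = u.
Proof.
  unfold kap, iot. nrm. rwa (tcomm _ _). rwa (lun _). rwb (an1 _). rwa (kelly _ _).
  rwa (tl _ _). rwa (tl _ _). rwa (c_unitl HG _). rewrite tid, comp_idl. reflexivity.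
Qed.

Lemma K_pre {X : Cc G} {A A' B D : Lc G} (h : hom A' A) (u : hom (F X ⊗ A) B) (v : hom (F X ⊗ B) D) :
  (idm (F X) ⊗' h) >> kap u v = kap ((idm (F X) ⊗' h) >> u) v.
Proof.
  unfold kap. nrm. rwa (tcomm _ _). rwa (an3 _). rwa (tr _ _). reflexivity.
Qed.
Lemma K_post {X : Cc G} {A B D E : Lc G} (u : hom (F X ⊗ A) B) (v : hom (F X ⊗ B) D) (h : hom D E) :
  kap u v >> h = kap u (v >> h).
Proof. unfold kap. nrm. reflexivity. Qed.
Lemma K_mid {X : Cc G} {A B B' D : Lc G} (u : hom (F X ⊗ A) B) (h : hom B B') (v : hom (F X ⊗ B') D) :
  kap (u >> h) v = kap u ((idm (F X) ⊗' h) >> v).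
Proof. unfold kap. rewrite <- tr. nrm. reflexivity. Qed.
Lemma iot_nat {X : Cc G} {A B : Lc G} (h : hom A B) : (idm (F X) ⊗' h) >> iot X B = iot X A >> h.
Proof. unfold iot. rwa (tcomm _ _). rewrite lun. reflexivity. Qed.
Lemma K_lin {X : Cc G} {A B D : Lc G} (h : hom A B) (v : hom (F X ⊗ B) D) :
  kap (iot X A >> h) v = (idm (F X) ⊗' h) >> v.
Proof. rewrite K_mid, K_idl. reflexivity. Qed.

Lemma R_kap {X Y : Cc G} (f : hom X Y) {A B D : Lc G} (u : hom (F Y ⊗ A) B) (v : hom (F Y ⊗ B) D) :
  rix f (kap u v) = kap (rix f u) (rix f v).
Proof.
  unfold rix, kap. nrm. rwa (tl _ _). rewrite (cX_nat HG f). rewrite <- (tl (cX X) _). nrm.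
  rwa (an _ _ _). rwa (tgr _ _ _). rwa (trl _ _). reflexivity.
Qed.
Lemma R_iot {X Y : Cc G} (f : hom X Y) (A : Lc G) : rix f (iot Y A) = iot X A.
Proof. unfold rix, iot. rwa (tl _ _). rewrite wX_nat. reflexivity. Qed.
Lemma R_comp {X Y Z : Cc G} (f : hom X Y) (g : hom Y Z) {A B : Lc G} (v : hom (F Z ⊗ A) B) :
  rix (f >> g) v = rix f (rix g v).
Proof. unfold rix. rewrite fm_comp. rwb (tl _ _). reflexivity. Qed.
Lemma R_id {X : Cc G} {A B : Lc G} (v : hom (F X ⊗ A) B) : rix (idm X) v = v.
Proof. unfold rix. rewrite fid, tid, comp_idl. reflexivity. Qed.
Lemma R_post {X Y : Cc G} (f : hom X Y) {A B D : Lc G} (v : hom (F Y ⊗ A) B) (h : hom B D) :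
  rix f v >> h = rix f (v >> h).
Proof. unfold rix. nrm. reflexivity. Qed.
Lemma R_pre {X Y : Cc G} (f : hom X Y) {A A' B : Lc G} (h : hom A' A) (v : hom (F Y ⊗ A) B) :
  (idm (F X) ⊗' h) >> rix f v = rix f ((idm (F Y) ⊗' h) >> v).
Proof. unfold rix. rwa (tcomm _ _). reflexivity. Qed.
Lemma R_lin {X Y : Cc G} (f : hom X Y) {A B : Lc G} (h : hom A B) :
  rix f (iot Y A >> h) = iot X A >> h.
Proof. rewrite <- R_post, R_iot. reflexivity. Qed.

Lemma K_addl {X : Cc G} {A B D : Lc G} (u u' : hom (F X ⊗ A) B) (v : hom (F X ⊗ B) D) :
  kap (add LA u u') v = add LA (kap u v) (kap u' v).
Proof. unfold kap. rewrite tens_addr, comp_addr, comp_addl. nrm. reflexivity. Qed.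
Lemma K_0l {X : Cc G} {A B D : Lc G} (v : hom (F X ⊗ B) D) :
  kap (zero LA (F X ⊗ A) B) v = zero LA _ _.
Proof. unfold kap. rewrite tens_0r, comp_0r, comp_0l. reflexivity. Qed.
Lemma K_0r {X : Cc G} {A B D : Lc G} (u : hom (F X ⊗ A) B) :
  kap u (zero LA (F X ⊗ B) D) = zero LA _ _.
Proof. unfold kap. rewrite !comp_0r. reflexivity. Qed.
Lemma R_0 {X Y : Cc G} (f : hom X Y) {A B : Lc G} : rix f (zero LA (F Y ⊗ A) B) = zero LA _ _.
Proof. unfold rix. apply comp_0r. Qed.
Lemma K_pair {X : Cc G} {A B D E : Lc G} (u : hom (F X ⊗ A) B) (v : hom (F X ⊗ B) D) (w : hom (F X ⊗ B) E) :
  kap u (pair (LP G) v w) = pair (LP G) (kap u v) (kap u w).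
Proof. unfold kap. rewrite !pair_comp. nrm. reflexivity. Qed.
Lemma R_pair {X Y : Cc G} (f : hom X Y) {A B D : Lc G} (v : hom (F Y ⊗ A) B) (w : hom (F Y ⊗ A) D) :
  rix f (pair (LP G) v w) = pair (LP G) (rix f v) (rix f w).
Proof. unfold rix. apply pair_comp. Qed.

Lemma LScomp_eq {P Q R : LSob G} (x : LShom P Q) (y : LShom Q R) :
  LScomp x y = (fst x >> fst y, kap (snd x) (rix (fst x) (snd y))).
Proof. unfold LScomp, kap, rix. f_equal. rewrite (tsplit (fm F (fst x)) (snd x)). nrm. rwa (tcomm _ _). reflexivity. Qed.

Definition cst {A A' : Lc G} (e : A = A') : hom A A' := match e with eq_refl => idm A end.
Lemma cst_inv1 {A A' : Lc G} (e : A = A') : cst e >> cst (eq_sym e) = idm _.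
Proof. destruct e. apply comp_idl. Qed.
Lemma cst_inv2 {A A' : Lc G} (e : A = A') : cst (eq_sym e) >> cst e = idm _.
Proof. destruct e. apply comp_idl. Qed.
Lemma castsrc_eq {X : Cc G} {A A' : Lc G} {Q : LSob G} (e : A = A') (x : LShom (X, A') Q) :
  castsrc e x = (fst x, (idm (F X) ⊗' cst e) >> snd x).
Proof. destruct e. simpl. rewrite tid, comp_idl. destruct x; reflexivity. Qed.
End KAP.


Section DC.
Variable G : LNLdata.
Variable HG : LNLax G.
Variable T : GDSCdata G.
Variable HT : GDSCax T.
Local Notation "A ⊗ B" := (tens (LM G) A B) (at level 30, right associativity).
Local Notation "f ⊗' g" := (tensm (LM G) f g) (at level 30, right associativity).
Local Notation "X × Y" := (prod (CP G) X Y) (at level 30, right associativity).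
Local Notation "A ⊕ B" := (prod (LP G) A B) (at level 30, right associativity).
Local Notation F := (Ff G).
Local Notation U := (Uf G).
Local Notation one := (unit (LM G)).
Local Notation LM := (LM G).
Local Notation LA := (LA G).
Local Notation lam := (lam T).
Local Notation D := (Tm T).

Definition inj1 (A B : Lc G) : hom A (A ⊕ B) := pair (LP G) (idm A) (zero LA A B).
Definition Pm (X Y : Cc G) : hom (F (X × Y) ⊗ lam (X × Y)) (lam X ⊕ lam Y) :=
  pair (LP G) (D (pr1 (CP G) X Y)) (D (pr2 (CP G) X Y)).
Definition Ps (X Y : Cc G) : hom (F (X × Y) ⊗ (lam X ⊕ lam Y)) (lam (X × Y)) := snd (phii T X Y).
Definition D1 {X Y Z : Cc G} (h : hom (X × Y) Z) : hom (F (X × Y) ⊗ lam X) (lam Z) :=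
  (idm _ ⊗' inj1 _ _) >> kap (Ps X Y) (D h).
Definition D2 {X Y Z : Cc G} (h : hom (X × Y) Z) : hom (F (X × Y) ⊗ lam Y) (lam Z) :=
  (idm _ ⊗' inj2 _ _) >> kap (Ps X Y) (D h).

Lemma Tid (X : Cc G) : D (idm X) = iot X (lam X).
Proof. pose proof (f_equal snd (T_id HT X)) as H. exact H. Qed.
Lemma Tcomp {X Y Z : Cc G} (f : hom X Y) (g : hom Y Z) : D (f >> g) = kap (D f) (rix f (D g)).
Proof. pose proof (f_equal snd (T_comp HT f g)) as H. rewrite LScomp_eq in H. exact H. Qed.

Lemma Pa_id (X Y : Cc G) : fst (phii T X Y) = idm _.
Proof.
  pose proof (f_equal fst (phi_inv1 HT X Y)) as H. cbn [fst LScomp phi LSpair TLS LSid Tob] in H.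
    rewrite pair_id, comp_idl in H. exact H.
Qed.
Lemma kPP (X Y : Cc G) : kap (Pm X Y) (Ps X Y) = iot _ _.
Proof.
  pose proof (f_equal snd (phi_inv1 HT X Y)) as H. rewrite LScomp_eq in H. cbn [fst snd phi LSpair TLS LSid Tob] in H.
  rewrite pair_id, R_id in H. exact H.
Qed.
Lemma kPsP (X Y : Cc G) : kap (Ps X Y) (Pm X Y) = iot _ _.
Proof.
  pose proof (f_equal snd (phi_inv2 HT X Y)) as H. rewrite LScomp_eq in H. rewrite Pa_id in H.
  cbn [fst snd phi LSpair TLS LSid Tob] in H.
  rewrite R_id in H. exact H.
Qed.
Lemma kPs1 (X Y : Cc G) : kap (Ps X Y) (D (pr1 (CP G) X Y)) = iot _ _ >> pr1 (LP G) _ _.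
Proof. rewrite <- kPsP, K_post. unfold Pm. rewrite pp1. reflexivity. Qed.
Lemma kPs2 (X Y : Cc G) : kap (Ps X Y) (D (pr2 (CP G) X Y)) = iot _ _ >> pr2 (LP G) _ _.
Proof. rewrite <- kPsP, K_post. unfold Pm. rewrite pp2. reflexivity. Qed.

Lemma Tpair {Z X Y : Cc G} (f : hom Z X) (g : hom Z Y) :
  D (pair (CP G) f g) = kap (pair (LP G) (D f) (D g)) (rix (pair (CP G) f g) (Ps X Y)).
Proof.
  assert (E : kap (D (pair (CP G) f g)) (rix (pair (CP G) f g) (Pm X Y)) = pair (LP G) (D f) (D g)).
  { unfold Pm. rewrite R_pair, K_pair, <- !Tcomp, pp1, pp2. reflexivity. }
  rewrite <- E, (K_assoc HG), <- (R_kap HG), kPP, R_iot, (K_idr HG). reflexivity.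
Qed.

Lemma D2_comp {X Y Z W : Cc G} (h : hom (X × Y) Z) (k : hom Z W) : D2 (h >> k) = kap (D2 h) (rix h (D k)).
Proof. unfold D2. rewrite Tcomp, <- (K_assoc HG), K_pre. reflexivity. Qed.
Lemma D1_comp {X Y Z W : Cc G} (h : hom (X × Y) Z) (k : hom Z W) : D1 (h >> k) = kap (D1 h) (rix h (D k)).
Proof. unfold D1. rewrite Tcomp, <- (K_assoc HG), K_pre. reflexivity. Qed.

Lemma inj1_pr2 (A B : Lc G) : inj1 A B >> pr2 (LP G) A B = zero LA _ _. Proof. unfold inj1. apply pp2. Qed.
Lemma inj1_pr1 (A B : Lc G) : inj1 A B >> pr1 (LP G) A B = idm _. Proof. unfold inj1. apply pp1. Qed.
Lemma inj2_pr2 (A B : Lc G) : inj2 A B >> pr2 (LP G) A B = idm _. Proof. unfold inj2. apply pp2. Qed.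
Lemma inj2_pr1 (A B : Lc G) : inj2 A B >> pr1 (LP G) A B = zero LA _ _. Proof. unfold inj2. apply pp1. Qed.

Lemma D1_pr2 {X Y Z : Cc G} (k : hom Y Z) : D1 (pr2 (CP G) X Y >> k) = zero LA _ _.
Proof.
  rewrite D1_comp. unfold D1. rewrite kPs2. rewrite <- comp_assoc, iot_nat. nrm.
  rewrite inj1_pr2, comp_0r, K_0l. reflexivity.
Qed.
Lemma D2_pr2 {X Y Z : Cc G} (k : hom Y Z) : D2 (pr2 (CP G) X Y >> k) = rix (pr2 (CP G) X Y) (D k).
Proof.
  rewrite D2_comp. unfold D2. rewrite kPs2. rewrite <- comp_assoc, iot_nat. nrm.
  rewrite inj2_pr2, comp_idr, (K_idl HG). reflexivity.
Qed.

Lemma SUM {Z X Y W : Cc G} (f : hom Z X) (g : hom Z Y) (h : hom (X × Y) W) :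
  D (pair (CP G) f g >> h) =
  add LA (kap (D f) (rix (pair (CP G) f g) (D1 h))) (kap (D g) (rix (pair (CP G) f g) (D2 h))).
Proof.
  rewrite Tcomp, Tpair, (K_assoc HG), <- (R_kap HG).
  rewrite (pair_split (a := LA)).
  assert (E1 : pair (LP G) (D f) (zero LA _ (lam Y)) = D f >> inj1 _ _).
  { unfold inj1. rewrite pair_comp, comp_idr, comp_0r. reflexivity. }
  assert (E2 : pair (LP G) (zero LA _ (lam X)) (D g) = D g >> inj2 _ _).
  { unfold inj2. rewrite pair_comp, comp_idr, comp_0r. reflexivity. }
  rewrite E1, E2, K_addl, !K_mid, !R_pre. reflexivity.
Qed.

Lemma pr1_swap (X Y : Cc G) : swapC (CP G) X Y >> pr1 (CP G) Y X = pr2 (CP G) X Y.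
Proof. unfold swapC. apply pp1. Qed.
Lemma swap_swap (X Y : Cc G) : swapC (CP G) X Y >> swapC (CP G) Y X = idm _.
Proof. unfold swapC. rewrite pair_comp, pp1, pp2. apply pair_id. Qed.

Lemma D1_swap {X Y Z : Cc G} (h : hom (X × Y) Z) : D1 h = rix (swapC (CP G) X Y) (D2 (swapC (CP G) Y X >> h)).
Proof.
  rewrite D2_comp. unfold D2 at 1.
  assert (E : kap (Ps Y X) (D (swapC (CP G) Y X)) =
     (idm _ ⊗' pair (LP G) (pr2 (LP G) _ _) (pr1 (LP G) _ _)) >> rix (swapC (CP G) Y X) (Ps X Y)).
  { unfold swapC at 1. rewrite Tpair, <- (K_assoc HG), K_pair, kPs1, kPs2.
    rewrite <- pair_comp, (K_lin HG). reflexivity. }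
  rewrite E. rewrite <- comp_assoc, tr, pair_comp, inj2_pr2, inj2_pr1.
  assert (E3 : pair (LP G) (idm (lam X)) (zero LA _ (lam Y)) = inj1 _ _) by reflexivity.
  rewrite E3. rewrite R_pre, <- (R_kap HG). rewrite <- R_comp, swap_swap, R_id, <- K_pre. reflexivity.
Qed.

Lemma i2_fst (X Y : Cc G) : fst (i2 T X Y) = idm _.
Proof. unfold i2. rewrite LScomp_eq. rewrite Pa_id. cbn [fst]. apply comp_idl. Qed.
Lemma i2_snd (X Y : Cc G) : snd (i2 T X Y) = (idm _ ⊗' inj2 _ _) >> Ps X Y.
Proof.
  unfold i2. rewrite LScomp_eq. cbn [fst snd]. rewrite R_id. fold (Ps X Y).
  rewrite (tsplit (wX (X × Y))). nrm. rewrite lun.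
  rewrite <- comp_assoc. fold (iot (X × Y) (lam Y)). rewrite (K_lin HG). reflexivity.
Qed.

Definition ci (A : Lc G) : hom A (lam (U A)) := cst (eq_sym (lam_U HT A)).
Definition co (A : Lc G) : hom (lam (U A)) A := cst (lam_U HT A).
Lemma ci_co (A : Lc G) : ci A >> co A = idm _. Proof. apply cst_inv2. Qed.
Lemma co_ci (A : Lc G) : co A >> ci A = idm _.
Proof. unfold co, ci. apply cst_inv1. Qed.

Lemma T3' {X : Cc G} {A B : Lc G} (u : hom (F X ⊗ A) B) :
  (idm (F (X × U A)) ⊗' ci A) >> D2 (prodm (CP G) (eta G X) (idm (U A)) >> nn G (F X) A >> fm U u)
  = (fm F (pr1 (CP G) X (U A)) ⊗' idm A) >> u >> ci B.
Proof.
  pose (x := (idm X, u) : LShom (X, A) (X, B)).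
  pose proof (f_equal snd (t3 HT x)) as H.
  rewrite !LScomp_eq in H.
  rewrite (castsrc_eq (eq_sym (lam_U HT B)) (i2 T X (U B))) in H.
  rewrite (castsrc_eq (eq_sym (lam_U HT A)) (i2 T X (U A))) in H.
  rewrite (i2_fst X (U A)), (i2_snd X (U A)), (i2_snd X (U B)) in H.
  cbn [fst snd] in H. unfold Wm, TLS in H. cbn [fst snd] in H.
  rewrite R_id in H. fold (ci A) (ci B) in H.
  assert (H' : (idm _ ⊗' ci A) >> D2 (brace x) = kap ((fm F (pr1 (CP G) X (U A)) ⊗' idm A) >> u)
      (rix (brace x) ((idm _ ⊗' ci B) >> ((idm _ ⊗' inj2 _ _) >> Ps X (U B))))).
  { unfold D2. rewrite !K_pre. exact (eq_sym H). }
  clear H.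
  assert (Eb : prodm (CP G) (eta G X) (idm (U A)) >> nn G (F X) A >> fm U u = brace x >> pr2 (CP G) _ _).
  { unfold brace. rewrite pp2. reflexivity. }
  rewrite Eb, D2_comp, K_pre, H', (K_assoc HG), <- (R_kap HG).
  rewrite <- !K_pre, kPs2. rwa (iot_nat _). rwa (inj2_pr2 _ _). rewrite comp_idr.
  rewrite iot_nat, R_lin, <- K_post, (K_idr HG). nrm. reflexivity.
Qed.
End DC.


Section DS.
Variable G : LNLdata.
Variable HG : LNLax G.
Variable T : GDSCdata G.
Variable HT : GDSCax T.
Local Notation "A ⊗ B" := (tens (LM G) A B) (at level 30, right associativity).
Local Notation "f ⊗' g" := (tensm (LM G) f g) (at level 30, right associativity).
Local Notation "X × Y" := (prod (CP G) X Y) (at level 30, right associativity).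
Local Notation "A ⊕ B" := (prod (LP G) A B) (at level 30, right associativity).
Local Notation F := (Ff G).
Local Notation U := (Uf G).
Local Notation one := (unit (LM G)).
Local Notation LM := (LM G).
Local Notation LA := (LA G).
Local Notation lam := (lam T).
Local Notation D := (Tm T).
Local Notation ci := (ci HT).
Local Notation co := (co HT).

Definition Du {A B : Lc G} (g : hom (U A) (U B)) : hom (F (U A) ⊗ A) B :=
  (idm _ ⊗' ci A) >> D g >> co B.

Lemma D_Du {A B : Lc G} (g : hom (U A) (U B)) : D g = (idm _ ⊗' co A) >> Du g >> ci B.
Proof.
  unfold Du. nrm. rewrite co_ci, comp_idr. rwa (tr _ _). rewrite co_ci, tid, comp_idl. reflexivity.
Qed.

Lemma Du_comp {A B C : Lc G} (f : hom (U A) (U B)) (g : hom (U B) (U C)) :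
  Du (f >> g) = kap (Du f) (rix f (Du g)).
Proof.
  unfold Du. rewrite (Tcomp HT). rewrite K_pre, K_post. symmetry.
  rewrite (K_mid ((idm (F (U A)) ⊗' ci A) >> D f) (co B)). rewrite R_pre. unfold rix.
  nrm. rwa (tr _ _). rewrite co_ci, tid, comp_idl. reflexivity.
Qed.

Lemma Du_id (A : Lc G) : Du (idm (U A)) = iot (U A) A.
Proof. unfold Du. rewrite (Tid HT). rwa (iot_nat _). rewrite ci_co, comp_idr. reflexivity. Qed.

Lemma s_lin (A B : Lc G) (h : hom A B) :
  prodm (CP G) (eta G (term (CP G))) (idm (U A)) >> nn G (F (term (CP G))) A >> fm U (iot (term (CP G)) A >> h)
  = pr2 (CP G) _ _ >> fm U h.
Proof.
  rewrite <- (eta_mon1 HG).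
  assert (E : prodm (CP G) (n1 G >> fm U (m1 G)) (idm (U A)) =
    prodm (CP G) (n1 G) (idm _) >> prodm (CP G) (fm U (m1 G)) (fm U (idm A))).
  { rewrite uid. cunf. csimp. reflexivity. }
  rewrite E. nrm. rwa (n_nat HG _ _). fcs. unfold iot.
  assert (E2 : tensm LM (m1 G) (idm A) >> (tensm LM (wX (term (CP G))) (idm A) >> (lu LM A >> h)) = lu LM A >> h).
  { rwa (tl _ _). unfold wX. rewrite (bang_eq (bang (CP G) (term (CP G))) (idm _)), fid, comp_idl, (m1_m1i HG), tid, comp_idl. reflexivity. }
  nrm. rewrite E2. rewrite <- fc. rwa (n_unitl HG _). reflexivity.
Qed.

Lemma L1 {A B : Lc G} (h : hom A B) : Du (fm U h) = iot (U A) A >> h.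
Proof.
  pose proof (T3' HG HT (iot (term (CP G)) A >> h)) as H.
  rewrite s_lin, (D2_pr2 HG HT) in H.
  assert (E : fm U h = pair (CP G) (bang (CP G) (U A)) (idm _) >> (pr2 (CP G) _ _ >> fm U h)).
  { rewrite <- comp_assoc, pp2, comp_idl. reflexivity. }
  unfold Du.
  transitivity ((idm _ ⊗' ci A) >> rix (pair (CP G) (bang (CP G) (U A)) (idm _)) (rix (pr2 (CP G) _ _) (D (fm U h))) >> co B).
  { rewrite <- R_comp, pp2, R_id. reflexivity. }
  rewrite R_pre, R_post, H. nrm. rewrite ci_co, comp_idr.
  change ((fm F (pr1 (CP G) _ (U A)) ⊗' idm A) >> (iot (term (CP G)) A >> h)) with
    (rix (pr1 (CP G) (term (CP G)) (U A)) (iot (term (CP G)) A >> h)).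
  rewrite <- R_comp, pp1, R_lin. reflexivity.
Qed.

Definition dd (A : Lc G) : hom (F (U A) ⊗ A) (F (U A)) := Du (eta G (U A)).

Lemma Du_eta_nat {A B : Lc G} (f : hom (U A) (U B)) :
  kap (Du f) (rix f (dd B)) = kap (dd A) (rix (eta G (U A)) (Du (fm U (fm F f)))).
Proof. unfold dd. rewrite <- !Du_comp, (eta_nat HG). reflexivity. Qed.

Lemma dd_nat {A B : Lc G} (f : hom A B) :
  (fm F (fm U f) ⊗' f) >> dd B = dd A >> fm F (fm U f).
Proof.
  pose proof (Du_eta_nat (fm U f)) as H. rewrite !L1, R_lin, (K_lin HG) in H.
  rewrite <- K_post, (K_idr HG) in H. unfold rix in H. rewrite <- comp_assoc, trl in H. exact H.
Qed.

Lemma dd_eps (A : Lc G) : dd A >> eps G A = (wX (U A) ⊗' idm A) >> lu LM A.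
Proof.
  assert (E : Du (eta G (U A) >> fm U (eps G A)) = Du (idm _)) by (rewrite (tri2 HG); reflexivity).
  rewrite Du_comp, L1, R_lin, <- K_post, (K_idr HG), Du_id in E. exact E.
Qed.

Lemma dd_p (A : Lc G) : dd A >> fm F (eta G (U A)) =
  (cX (U A) ⊗' idm A) >> asc LM _ _ _ >> (fm F (eta G (U A)) ⊗' dd A) >> dd (F (U A)).
Proof.
  pose proof (Du_eta_nat (eta G (U A))) as H. rewrite L1, R_lin, <- K_post, (K_idr HG) in H.
  rewrite <- H. unfold kap, rix. nrm. rwa (trl _ _). reflexivity.
Qed.

Lemma dd_w (A : Lc G) : dd A >> wX (U A) = zero LA _ _.
Proof.
  unfold wX.
  rewrite (bang_eq (bang (CP G) (U A)) (fm U (bang (LP G) A) >> bang (CP G) _)).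
  rewrite fm_comp. nrm. rwb (dd_nat _).
  rewrite (bang_eq (bang (LP G) A) (zero LA _ _)), tens_0r, !comp_0l. reflexivity.
Qed.
End DS.


Section LB.
Variable G : LNLdata.
Variable HG : LNLax G.
Variable T : GDSCdata G.
Variable HT : GDSCax T.
Local Notation "A ⊗ B" := (tens (LM G) A B) (at level 30, right associativity).
Local Notation "f ⊗' g" := (tensm (LM G) f g) (at level 30, right associativity).
Local Notation "X × Y" := (prod (CP G) X Y) (at level 30, right associativity).
Local Notation "A ⊕ B" := (prod (LP G) A B) (at level 30, right associativity).
Local Notation F := (Ff G).
Local Notation U := (Uf G).
Local Notation one := (unit (LM G)).
Local Notation LM := (LM G).
Local Notation LA := (LA G).
Local Notation lam := (lam T).
Local Notation D := (Tm T).
Local Notation ci := (ci HT).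
Local Notation co := (co HT).
Local Notation Du := (Du HT).
Local Notation dd := (dd HT).

Lemma Kcast {X : Cc G} {A B C : Lc G} (u : hom (F X ⊗ lam (U A)) (lam (U B))) (v : hom (F X ⊗ lam (U B)) (lam (U C))) :
  (idm _ ⊗' ci A) >> kap u v >> co C = kap ((idm _ ⊗' ci A) >> u >> co B) ((idm _ ⊗' ci B) >> v >> co C).
Proof.
  rewrite K_pre, K_post. symmetry.
  rewrite (K_mid ((idm (F X) ⊗' ci A) >> u) (co B)).
  nrm. rwa (tr _ _). rewrite co_ci, tid, comp_idl. reflexivity.
Qed.

Lemma D_U {A B : Lc G} (h : hom A B) : D (fm U h) = iot _ _ >> co A >> h >> ci B.
Proof. rewrite (D_Du HT), (L1 HG). nrm. rwa (iot_nat _). reflexivity. Qed.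

Lemma K_iot_r {X : Cc G} {A B C : Lc G} (u : hom (F X ⊗ A) B) (h : hom B C) : kap u (iot X B >> h) = u >> h.
Proof. rewrite <- K_post, (K_idr HG). reflexivity. Qed.

Lemma N_form (B : Lc G) :
  prodm (CP G) (eta G (U B)) (idm (U B)) >> nn G (F (U B)) B >> fm U (eps G B ⊗' idm B) = nn G B B.
Proof.
  rewrite <- (uid B). nrm. rwb (n_nat HG _ _). rewrite uid.
  assert (E : prodm (CP G) (eta G (U B)) (idm (U B)) >> prodm (CP G) (fm U (eps G B)) (idm (U B)) = idm _).
  { cunf. csimp. rewrite (tri2 HG), comp_idr. apply pair_id. }
  rwa E. apply comp_idl.
Qed.

Lemma D2N (B : Lc G) :
  (idm _ ⊗' ci B) >> D2 T (nn G B B) = (fm F (pr1 (CP G) _ _) ⊗' idm B) >> (eps G B ⊗' idm B) >> ci (B ⊗ B).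
Proof. rewrite <- (N_form B). rewrite (T3' HG HT). nrm. reflexivity. Qed.

Lemma D2_lin {X Y : Cc G} {B C : Lc G} (h : hom (X × Y) (U B)) (k : hom B C) :
  D2 T (h >> fm U k) = D2 T h >> co B >> k >> ci C.
Proof. rewrite (D2_comp HG HT), D_U. nrm. rewrite R_lin. rewrite K_iot_r. reflexivity. Qed.


Lemma dd_diag (A : Lc G) : dd A >> fm F (diagC (CP G) (U A)) =
  add LA (kap (dd A) (sym LM _ _ >> mm G _ _)) (kap (dd A) (mm G _ _)).
Proof.
  assert (E1 : dd A >> fm F (diagC (CP G) (U A)) = Du (eta G (U A) >> fm U (fm F (diagC (CP G) (U A))))).
  { rewrite (Du_comp HT), (L1 HG), R_lin, K_iot_r. reflexivity. }
  rewrite E1, <- (eta_nat HG), <- (eta_mon HG).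
  assert (E2 : diagC (CP G) (U A) >> (prodm (CP G) (eta G (U A)) (eta G (U A)) >> nn G _ _ >> fm U (mm G _ _)) =
     pair (CP G) (eta G (U A)) (eta G (U A)) >> (nn G _ _ >> fm U (mm G (U A) (U A)))).
  { cunf. csimp. reflexivity. }
  rewrite E2. unfold Du at 1. rewrite (SUM HG HT). rewrite comp_addr, comp_addl. rewrite !Kcast.
  change ((idm _ ⊗' ci A) >> D (eta G (U A)) >> co _) with (dd A).
  f_equal; f_equal.
  - rewrite (D1_swap HG HT). rwb (n_sym HG _ _). rewrite fc, D2_lin.
    unfold rix. nrm. rwa (tcomm _ _). rwa (tcomm _ _). rwa (D2N _).
    rwa (ci_co HT _). rwa (ci_co HT _). rewrite comp_idr.
    rwa (tl _ _). rwa (tl _ _). rwa (tl _ _). fcs. unfold swapC. csimp.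
    rewrite (tri1 HG), tid, comp_idl. reflexivity.
  - rewrite D2_lin.
    unfold rix. nrm. rwa (tcomm _ _). rwa (D2N _).
    rwa (ci_co HT _). rwa (ci_co HT _). rewrite comp_idr.
    rwa (tl _ _). rwa (tl _ _). fcs. csimp.
    rewrite (tri1 HG), tid, comp_idl. reflexivity.
Qed.


Lemma dd_c (A : Lc G) : dd A >> cA A =
  (cA A ⊗' idm A) >> asc LM _ _ _ >>
  add LA (idm (F (U A)) ⊗' dd A)
    ((idm (F (U A)) ⊗' sym LM (F (U A)) A) >> asci LM _ _ _ >> (dd A ⊗' idm (F (U A)))).
Proof.
  unfold cA. unfold cX at 1. rewrite <- comp_assoc, dd_diag. rewrite comp_addl, !K_post. nrm.
  rewrite (mm_mmi HG), comp_idr. rewrite !comp_addr. unfold kap. nrm. rewrite comp_idr.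
  rewrite add_comm. f_equal.
  rwa (symn _ _). rwa (hexa' _ _ _). rwa (tl _ _). rewrite (c_comm HG). reflexivity.
Qed.
End LB.


Section IC.
Variable G : LNLdata.
Variable HG : LNLax G.
Variable T : GDSCdata G.
Variable HT : GDSCax T.
Local Notation "A ⊗ B" := (tens (LM G) A B) (at level 30, right associativity).
Local Notation "f ⊗' g" := (tensm (LM G) f g) (at level 30, right associativity).
Local Notation "X × Y" := (prod (CP G) X Y) (at level 30, right associativity).
Local Notation "A ⊕ B" := (prod (LP G) A B) (at level 30, right associativity).
Local Notation F := (Ff G).
Local Notation U := (Uf G).
Local Notation one := (unit (LM G)).
Local Notation LM := (LM G).
Local Notation LA := (LA G).
Local Notation dd := (dd HT).

Definition nab (A : Lc G) : hom (F (U A) ⊗ F (U A)) (F (U A)) := mm G (U A) (U A) >> fm F (kk A).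

Lemma nab_assoc (A : Lc G) :
  (nab A ⊗' idm _) >> nab A = asc LM _ _ _ >> (idm _ ⊗' nab A) >> nab A.
Proof.
  unfold nab. rewrite <- (tl (mm G _ _) (fm F (kk A))). rewrite <- (tr (mm G _ _) (fm F (kk A))).
  rewrite <- (fid (U A)). nrm. rwa (m_nat HG _ _). rwa (m_nat HG _ _).
    rewrite !fid. rwb (m_assoc HG _ _ _). fcs. rewrite (k_assoc HG). nrm. reflexivity.
Qed.

Lemma nab_comm (A : Lc G) : sym LM _ _ >> nab A = nab A.
Proof.
  unfold nab. rwb (m_sym HG _ _). fcs. rewrite (k_comm HG). reflexivity.
Qed.

Lemma FUnab (A : Lc G) : fm F (fm U (add LA (pr1 (LP G) A A) (pr2 (LP G) A A))) =
  cX (U (A ⊕ A)) >> (fm F (fm U (pr1 (LP G) A A)) ⊗' fm F (fm U (pr2 (LP G) A A))) >> nab A.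
Proof.
  unfold cX, nab. nrm. rwa (mmi_nat HG _ _). rwa (mmi_mm HG _ _). rewrite comp_idl. fcs.
  f_equal.
  assert (E : diagC (CP G) (U (A ⊕ A)) >> prodm (CP G) (fm U (pr1 (LP G) A A)) (fm U (pr2 (LP G) A A)) = psi A A).
  { unfold psi. cunf. csimp. reflexivity. }
  rwa E. unfold kk. rwa (psi_psii HG A A). rewrite comp_idl. reflexivity.
Qed.

Definition tU : hom (term (CP G)) (U (term (LP G))) := eta G _ >> fm U (zero LA _ _).
Definition e0 (A : Lc G) : hom one (F (U A)) := m1 G >> fm F tU >> fm F (fm U (zero LA (term (LP G)) A)).

Lemma FU0 (A : Lc G) : fm F (fm U (zero LA A A)) = wX (U A) >> e0 A.
Proof.
  assert (Z : zero LA A A = bang (LP G) A >> zero LA _ A) by (rewrite comp_0r; reflexivity).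
  assert (Z2 : fm U (bang (LP G) A) = bang (CP G) (U A) >> tU) by apply (u0_uniq HG).
  rewrite Z, fm_comp, Z2. unfold e0, wX. nrm. rwa (m1i_m1 HG). rewrite comp_idl. fcs. reflexivity.
Qed.

Definition EE (A : Lc G) : hom A (F (U A)) := lui LM A >> (e0 A ⊗' idm A) >> dd A.

Lemma i1nab (A : Lc G) : inj1 A A >> add LA (pr1 (LP G) A A) (pr2 (LP G) A A) = idm _.
Proof. rewrite comp_addr, inj1_pr1, inj1_pr2. apply add_0r. Qed.
Lemma i2nab (A : Lc G) : inj2 A A >> add LA (pr1 (LP G) A A) (pr2 (LP G) A A) = idm _.
Proof. rewrite comp_addr, inj2_pr1, inj2_pr2. apply add_0l. Qed.

Lemma mvh {X : Cc G} {A A' : Lc G} (h : hom A' A) :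
  (idm (F X) ⊗' h) >> (cX X ⊗' idm A) >> asc LM _ _ _ >> (idm (F X) ⊗' sym LM (F X) A) >> asci LM _ _ _ =
  (cX X ⊗' idm A') >> asc LM _ _ _ >> (idm (F X) ⊗' sym LM (F X) A') >> asci LM _ _ _ >> ((idm (F X) ⊗' h) ⊗' idm (F X)).
Proof.
  nrm. rwa (tcomm _ _). rwa (an3 _). rwa (tr _ _). rewrite symn. rewrite <- tr. nrm. rwa (ain2 _). reflexivity.
Qed.

Lemma nabla_rule (A : Lc G) : dd A = (idm _ ⊗' EE A) >> nab A.
Proof.
  assert (S1 : dd A = (fm F (fm U (inj1 A A)) ⊗' inj2 A A) >> dd (A ⊕ A) >> fm F (fm U (add LA (pr1 (LP G) A A) (pr2 (LP G) A A)))).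
  { nrm. rwb (dd_nat HG HT _). rwb (tensm_comp _ _ _ _ _). fcs. rewrite i1nab, i2nab, uid, fid, tid, comp_idl. reflexivity. }
  etransitivity; [exact S1|]. clear S1.
  rewrite FUnab.
  assert (C : dd (A ⊕ A) >> cX (U (A ⊕ A)) = (cX (U (A ⊕ A)) ⊗' idm (A ⊕ A)) >> asc LM _ _ _ >>
    add LA (idm _ ⊗' dd (A ⊕ A))
      ((idm _ ⊗' sym LM _ _) >> asci LM _ _ _ >> (dd (A ⊕ A) ⊗' idm _))) by exact (dd_c HG HT (A ⊕ A)).
  nrm. rwa C. rewrite ?comp_addl. nrm. rewrite ?comp_addr.
  match goal with |- add _ ?a ?b = _ => assert (Zb : b = zero LA _ _); [|assert (Ta : a = (idm _ ⊗' EE A) >> nab A)] end.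
  - rewrite (tsplit (fm F (fm U (inj1 A A))) (inj2 A A)). nrm. rwa (mvh _).
    rwa (tl (idm _ ⊗' inj2 A A) (dd (A ⊕ A))). rewrite (rk2 (tlg (fm F (fm U (pr1 (LP G) A A))) (fm F (fm U (pr2 (LP G) A A))) ((idm _ ⊗' inj2 A A) >> dd (A ⊕ A)))). nrm. rwb (dd_nat HG HT _). rwa (trg _ _ _). rewrite inj2_pr1, tens_0r, comp_0l, tens_0l.
    rewrite !comp_0l, !comp_0r. reflexivity.
  - rewrite (rk2 (tgl (fm F (fm U (inj1 A A))) (inj2 A A) (cX (U (A ⊕ A))))).
    rewrite (cX_nat HG). rewrite <- tlg. nrm. rwa (an _ _ _). rwa (tgr _ _ _).
    rwb (tensm_comp _ _ _ _ _). rwb (dd_nat HG HT _). rwb (tensm_comp _ _ _ _ _). fcs.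
    rewrite inj1_pr1, inj1_pr2, inj2_pr2, uid, fid, FU0.
    assert (I : ((wX (U A) >> e0 A) ⊗' idm A) >> dd A = iot (U A) A >> EE A).
    { unfold iot, EE. rewrite <- tl. nrm. rwa (lu_iso1 LM _). rewrite comp_idl. reflexivity. }
    rewrite I. rewrite <- (K_lin HG (EE A) (nab A)). unfold kap. nrm. reflexivity.
  - rewrite Zb, Ta, add_0r. reflexivity.
Qed.

Lemma dd_inter (A : Lc G) :
  asc LM _ _ _ >> (idm (F (U A)) ⊗' sym LM A A) >> asci LM _ _ _ >> (dd A ⊗' idm A) >> dd A
  = (dd A ⊗' idm A) >> dd A.
Proof.
  rewrite (nabla_rule A).
  assert (R : (((idm _ ⊗' EE A) >> nab A) ⊗' idm A) >> ((idm _ ⊗' EE A) >> nab A) =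
     asc LM _ _ _ >> (idm _ ⊗' (EE A ⊗' EE A)) >> (idm _ ⊗' nab A) >> nab A).
  { rewrite <- tl. nrm. rwb (tcomm _ _). rwa (nab_assoc A). rwa (tlr _ _). rwa (an _ _ _). reflexivity. }
  rwa R. rwa (aia _ _ _). rewrite comp_idl. rwa (tr _ _). rwa (tr _ _).
  rwb (symn (EE A) (EE A)). rewrite nab_comm. rewrite <- tr. nrm. reflexivity.
Qed.
End IC.


Theorem corollary4p40 (G : LNLdata) (T : GDSCdata G)
  (HG : LNLax G) (HT : GDSCax T) : DiffSeely G.
Proof.
  unfold DiffSeely.
  split; [|split; [|split; [|split; [|split]]]].
  - intro A. unfold pp. apply (tri1 HG).
  - intro A. unfold pp. rewrite fc, (tri2 HG), fid. reflexivity.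
  - intro A. unfold pp. rewrite !fc. rewrite (eta_nat HG (eta G (Uf G A))). reflexivity.
  - intros A B. exists (mm G _ _ >> fm (Ff G) (psii A B)). split.
    + nrm. rwa (mmi_mm HG _ _). rewrite comp_idl, fc.
      change (pair (CP G) (fm (Uf G) (pr1 (LP G) A B)) (fm (Uf G) (pr2 (LP G) A B))) with (psi A B).
      rewrite (psi_psii HG), fid. reflexivity.
    + nrm. rwa (fc _ _).
      change (pair (CP G) (fm (Uf G) (pr1 (LP G) A B)) (fm (Uf G) (pr2 (LP G) A B))) with (psi A B).
      rewrite (psii_psi HG), fid, comp_idl. apply (mm_mmi HG).
  - exists (m1 G >> fm (Ff G) (tU G)). split.
    + nrm. rwa (m1i_m1 HG). rewrite comp_idl, fc.
      rewrite (u0_uniq HG (bang (CP G) _ >> tU G) (idm _)), fid. reflexivity.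
    + nrm. rwa (fc _ _). rewrite (bang_eq (tU G >> bang (CP G) _) (idm _)), fid, comp_idl. apply (m1_m1i HG).
  - exists (dd HT). split; [|split; [|split; [|split; [|split]]]].
    + intros A B f. exact (dd_nat HG HT f).
    + intro A. exact (dd_w HG HT A).
    + intro A. exact (dd_c HG HT A).
    + intro A. exact (dd_eps HG HT A).
    + intro A. exact (dd_p HG HT A).
    + intro A. exact (dd_inter HG HT A).
Qed.
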